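(* Let $\mathcal{L}\subseteq\mathcal{L}_c$ be a class of latency functions and consider a parallel-link network with $n=2$ links, unit demand and $\ell_1,\ell_2\in\mathcal{L}$. Let $x^*$ be an optimal flow, let $t\in\mathcal{T}(\infty)$ and suppose $x_1(t)>0$, $x_2(t)>0$. If there is $i\in\{1,2\}$ with $x_i(t)>x^*_i$ and $x_i(t)\ge\frac12$, then $$C(x(t))\le\frac{1}{1-\mu_2(\mathcal{L})}\,C(x^* ).$$
   Context: $\mathcal{L}_c$: strictly increasing, convex, continuously differentiable functions $\mathbb{R}_+\to\mathbb{R}_+$. Flows $x\in\mathbb{R}^2_+$ with $x_1+x_2=1$; $C(x)=\sum_i\ell_i(x_i)x_i$; $x^*$ minimizes $C$ over flows. For tolls $t$, $x(t)$ is the unique Wardrop equilibrium for $t$ (for all $i,j$ with $x_i>0$: $\ell_i(x_i)+t_i\le\ell_j(x_j)+t_j$); $\Pi_i(t)=t_ix_i(t)$; $\mathcal{T}(\infty)$ is the set of $t\in\mathbb{R}^2_+$ with $\Pi_i(t_i,t_{-i})\ge\Pi_i(t'_i,t_{-i})$ for all $i$ and all $t'_i\ge0$ (flow recomputed). For $\ell\in\mathcal{L}$ define $\mu_2(\ell)=\sup_{x\ge\frac12,\ 0\le x^*\le x}\frac{(\ell(x)-\ell(x^* ))(x^*+1-2x)}{\ell(x)}$, and $\mu_2(\mathcal{L})=\sup_{\ell\in\mathcal{L}}\mu_2(\ell)$ (which lies in $[0,1]$). *)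

(* Defs.v *)
From Stdlib Require Import Reals Lra.
Open Scope R_scope.

(* Latency functions are represented as f : R -> R; only the values on
   [0, +oo) matter. *)

Definition strictly_incr_nonneg (f : R -> R) : Prop :=
  forall x y, 0 <= x -> x < y -> f x < f y.

Definition convex_nonneg (f : R -> R) : Prop :=
  forall x y lam, 0 <= x -> 0 <= y -> 0 <= lam <= 1 ->
    f (lam * x + (1 - lam) * y) <= lam * f x + (1 - lam) * f y.

(* Continuously differentiable on R_+: f agrees on [0,+oo) with a C^1
   function on R (equivalent to being C^1 on [0,+oo) with a one-sided
   derivative at 0). *)
Definition C1_nonneg (f : R -> R) : Prop :=
  exists g g' : R -> R,
    (forall x, 0 <= x -> g x = f x) /\
    (forall x, derivable_pt_lim g x (g' x)) /\
    continuity g'.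

Definition in_Lc (f : R -> R) : Prop :=
  (forall x, 0 <= x -> 0 <= f x) /\
  strictly_incr_nonneg f /\ convex_nonneg f /\ C1_nonneg f.

Definition is_flow (x1 x2 : R) : Prop := 0 <= x1 /\ 0 <= x2 /\ x1 + x2 = 1.

Definition cost (l1 l2 : R -> R) (x1 x2 : R) : R := l1 x1 * x1 + l2 x2 * x2.

Definition is_optimal (l1 l2 : R -> R) (xs1 xs2 : R) : Prop :=
  is_flow xs1 xs2 /\
  forall y1 y2, is_flow y1 y2 -> cost l1 l2 xs1 xs2 <= cost l1 l2 y1 y2.

Definition is_WE (l1 l2 : R -> R) (t1 t2 x1 x2 : R) : Prop :=
  is_flow x1 x2 /\
  (0 < x1 -> l1 x1 + t1 <= l2 x2 + t2) /\
  (0 < x2 -> l2 x2 + t2 <= l1 x1 + t1).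

(* t in T(infinity): nonnegative tolls such that no link owner can raise its
   revenue t_i x_i(t) by unilaterally changing its toll to any t_i' >= 0,
   the flow being recomputed as the (unique) Wardrop equilibrium. *)
Definition in_T_infty (l1 l2 : R -> R) (t1 t2 : R) : Prop :=
  0 <= t1 /\ 0 <= t2 /\
  forall x1 x2, is_WE l1 l2 t1 t2 x1 x2 ->
    (forall t1' y1 y2, 0 <= t1' -> is_WE l1 l2 t1' t2 y1 y2 ->
        t1' * y1 <= t1 * x1) /\
    (forall t2' y1 y2, 0 <= t2' -> is_WE l1 l2 t1 t2' y1 y2 ->
        t2' * y2 <= t2 * x2).

(* The set of values whose supremum is mu_2(l). *)
Definition mu2_values (l : R -> R) (r : R) : Prop :=
  exists x xs, 1/2 <= x /\ 0 <= xs <= x /\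
    r = (l x - l xs) * (xs + 1 - 2 * x) / l x.

(* The set of values whose supremum is mu_2(L) = sup_{l in L} mu_2(l)
   (= sup of the union of the sets above). *)
Definition mu2_class_values (L : (R -> R) -> Prop) (r : R) : Prop :=
  exists l, L l /\ mu2_values l r.

(* Main.v *)
Require Import Defs.
From Stdlib Require Import Reals Lra.
Open Scope R_scope.

Lemma cont_Lc (l : R -> R) (x : R) : in_Lc l -> 0 <= x ->
  forall eps, 0 < eps -> exists d, 0 < d /\
    forall y, 0 <= y -> y <> x -> Rabs (y - x) < d -> Rabs (l y - l x) < eps.
Proof.
  intros [_ [_ [_ [g [g' [Hg [Hd _]]]]]]] Hx eps Heps.
  assert (Hc : continuity_pt g x).
  { apply derivable_continuous_pt. exists (g' x). apply Hd. }
  destruct (Hc eps Heps) as [d [Hd0 Hdd]].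
  exists d; split; [exact Hd0|].
  intros y Hy Hyx Hyd.
  rewrite <- (Hg y Hy), <- (Hg x Hx).
  apply (Hdd y). split.
  - split; [exact I| intro E; apply Hyx; symmetry; exact E].
  - exact Hyd.
Qed.

Lemma core (L : (R -> R) -> Prop) (l1 l2 : R -> R) (HL1 : L l1)
  (Hl1 : in_Lc l1) (Hl2 : in_Lc l2)
  (xs1 xs2 t1 t2 x1 x2 mu : R) :
  0 <= xs1 -> 0 <= xs2 -> xs1 + xs2 = 1 ->
  0 <= t1 -> 0 <= t2 ->
  (forall t1' y1 y2, 0 <= t1' -> is_WE l1 l2 t1' t2 y1 y2 -> t1' * y1 <= t1 * x1) ->
  (forall t2' y1 y2, 0 <= t2' -> is_WE l1 l2 t1 t2' y1 y2 -> t2' * y2 <= t2 * x2) ->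
  x1 + x2 = 1 -> 0 < x1 -> 0 < x2 -> l1 x1 + t1 = l2 x2 + t2 ->
  x1 > xs1 -> x1 >= 1/2 ->
  is_lub (mu2_class_values L) mu -> mu < 1 ->
  cost l1 l2 x1 x2 <= / (1 - mu) * cost l1 l2 xs1 xs2.
Proof.
  intros Hxs1 Hxs2 Hxs Ht1 Ht2 H1 H2 Hx Hx1 Hx2 Heq Hgt Hhalf Hlub Hmu.
  pose proof Hl1 as [Hp1 [Hi1 [Hc1 _]]].
  pose proof Hl2 as [Hp2 [Hi2 [Hc2 _]]].
  set (A := l1 x1 - l1 xs1).
  set (D := x1 - xs1).
  set (K := A / D).
  assert (HD : 0 < D) by (unfold D; lra).
  assert (HA : 0 <= A) by (unfold A; left; apply Rlt_Rminus; apply Hi1; lra).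
  assert (HK : 0 <= K) by (unfold K; unfold Rdiv; apply Rmult_le_pos; [lra|left; apply Rinv_0_lt_compat; lra]).
  assert (Hstep : forall e, 0 < e -> e <= D -> e <= x1 ->
     t1 - t2 >= K * (x1 - x2) - 2 * ((l1 x1 - l1 (x1 - e)) + (l2 (x2 + e) - l2 x2))).
  { intros e He HeD Hex.
    set (a := (l1 x1 - l1 (x1 - e)) + (l2 (x2 + e) - l2 x2)).
    assert (Hconv : l1 x1 - l1 (x1 - e) >= e * K).
    { pose proof (Hc1 xs1 x1 (e / D) Hxs1 ltac:(lra)) as Hcv.
      assert (Hl : 0 <= e / D <= 1).
      { split. unfold Rdiv; apply Rmult_le_pos; [lra|left; apply Rinv_0_lt_compat; lra].
        apply (Rmult_le_reg_r D); [lra|]. unfold Rdiv. rewrite Rmult_assoc, Rinv_l; lra. }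
      specialize (Hcv Hl).
      replace (e / D * xs1 + (1 - e / D) * x1) with (x1 - e) in Hcv
        by (unfold D in *; field; lra).
      replace (e * K) with (e / D * A) by (unfold K; field; lra).
      unfold A. lra. }
    assert (Hm2 : l2 x2 < l2 (x2 + e)) by (apply Hi2; lra).
    assert (Ha : a >= e * K) by (unfold a; lra).
    assert (O1 : a * (x1 - e) <= t1 * e).
    { assert (W : is_WE l1 l2 (t1 + a) t2 (x1 - e) (x2 + e)).
      { unfold is_WE, is_flow, a. repeat split; intros; lra. }
      assert (0 <= e * K) by (apply Rmult_le_pos; lra).
      pose proof (H1 (t1 + a) (x1 - e) (x2 + e) ltac:(lra) W) as HW.
      assert ((t1 + a) * (x1 - e) = t1 * x1 - t1 * e + a * (x1 - e)) by ring. lra. }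
    assert (O2 : t2 * e <= a * (x2 + e)).
    { destruct (Rle_lt_dec a t2) as [Hat|Hat].
      - assert (W : is_WE l1 l2 t1 (t2 - a) (x1 - e) (x2 + e)).
        { unfold is_WE, is_flow, a. repeat split; intros; lra. }
        pose proof (H2 (t2 - a) (x1 - e) (x2 + e) ltac:(lra) W) as HW.
        assert ((t2 - a) * (x2 + e) = t2 * x2 + t2 * e - a * (x2 + e)) by ring. lra.
      - nra. }
    assert (Hx12 : 0 <= x1 - x2) by lra.
    assert (E1 : (t1 - t2) * e >= e * (K * (x1 - x2) - 2 * a)).
    { assert (a * (x1 - x2) >= e * K * (x1 - x2)) by nra. nra. }
    apply Rle_ge. apply (Rmult_le_reg_l e); [lra|]. lra. }
  assert (Hlim : t1 - t2 >= K * (x1 - x2)).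
  { destruct (Rlt_or_le (t1 - t2) (K * (x1 - x2))) as [Hc|Hc]; [|lra].
    exfalso.
    set (eta := (K * (x1 - x2) - (t1 - t2)) / 4).
    assert (Heta : 0 < eta) by (unfold eta; lra).
    destruct (cont_Lc l1 x1 Hl1 ltac:(lra) eta Heta) as [d1 [Hd1 Hd1']].
    destruct (cont_Lc l2 x2 Hl2 ltac:(lra) eta Heta) as [d2 [Hd2 Hd2']].
    set (e := Rmin (Rmin (d1/2) (d2/2)) (Rmin D x1)).
    assert (He0 : 0 < e).
    { unfold e. repeat apply Rmin_pos; lra. }
    assert (HeD : e <= D) by (unfold e; eapply Rle_trans; [apply Rmin_r|apply Rmin_l]).
    assert (Hex : e <= x1) by (unfold e; eapply Rle_trans; [apply Rmin_r|apply Rmin_r]).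
    assert (Hed1 : e <= d1/2) by (unfold e; eapply Rle_trans; [apply Rmin_l|apply Rmin_l]).
    assert (Hed2 : e <= d2/2) by (unfold e; eapply Rle_trans; [apply Rmin_l|apply Rmin_r]).
    pose proof (Hstep e He0 HeD Hex) as S.
    assert (B1 : Rabs (l1 (x1 - e) - l1 x1) < eta).
    { apply Hd1'; [lra|lra|]. replace (x1 - e - x1) with (- e) by ring.
      rewrite Rabs_Ropp, Rabs_right; lra. }
    assert (B2 : Rabs (l2 (x2 + e) - l2 x2) < eta).
    { apply Hd2'; [lra|lra|]. replace (x2 + e - x2) with e by ring.
      rewrite Rabs_right; lra. }
    apply Rabs_def2 in B1. apply Rabs_def2 in B2.
    unfold eta in *. lra. }
  set (M := l1 x1).
  assert (HM : 0 < M).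
  { unfold M. pose proof (Hp1 0 (Rle_refl 0)). pose proof (Hi1 0 x1 (Rle_refl 0) Hx1). lra. }
  assert (Hmub : A * (xs1 + 1 - 2 * x1) <= mu * M).
  { assert (V : mu2_class_values L (A * (xs1 + 1 - 2 * x1) / M)).
    { exists l1. split; [exact HL1|]. exists x1, xs1. repeat split; try lra. }
    pose proof (proj1 Hlub _ V) as Hv.
    apply (Rmult_le_reg_r (/ M)); [apply Rinv_0_lt_compat; lra|].
    replace (mu * M * / M) with mu by (field; lra). exact Hv. }
  assert (Hmu0 : 0 <= mu).
  { apply (proj1 Hlub). exists l1. split; [exact HL1|]. exists x1, x1.
    repeat split; try lra; unfold Rdiv; ring. }
  assert (HB : 0 <= l2 xs2 - l2 x2) by (left; apply Rlt_Rminus; apply Hi2; lra).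
  assert (HAD : (t1 - t2) * D >= A * (x1 - x2)).
  { replace (A * (x1 - x2)) with (K * (x1 - x2) * D) by (unfold K; field; lra). nra. }
  assert (Hid : cost l1 l2 x1 x2 - cost l1 l2 xs1 xs2
     = (t2 - t1) * D + A * xs1 - (l2 xs2 - l2 x2) * xs2).
  { unfold cost, A, D.
    replace xs2 with (1 - xs1) by lra. replace x2 with (1 - x1) in * by lra.
    replace (l2 (1 - x1)) with (l1 x1 + t1 - t2) by lra. ring. }
  assert (HCM : M <= cost l1 l2 x1 x2).
  { unfold cost. fold M. assert (M <= l2 x2) by (unfold M; nra). nra. }
  assert (Hfin : cost l1 l2 x1 x2 * (1 - mu) <= cost l1 l2 xs1 xs2).
  { assert (A * (xs1 + 1 - 2 * x1) = A * (xs1 + x2 - x1)) by (f_equal; lra).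
    nra. }
  apply (Rmult_le_reg_l (1 - mu)); [lra|].
  rewrite <- Rmult_assoc, Rinv_r, Rmult_1_l by lra. lra.
Qed.

Lemma WE_swap l1 l2 t1 t2 x1 x2 : is_WE l2 l1 t2 t1 x2 x1 -> is_WE l1 l2 t1 t2 x1 x2.
Proof. unfold is_WE, is_flow. intros [[? [? ?]] [? ?]]. repeat split; auto; lra. Qed.

Theorem mainTheorem11 :
  forall (L : (R -> R) -> Prop),
    (forall l, L l -> in_Lc l) ->
  forall (l1 l2 : R -> R), L l1 -> L l2 ->
  forall xs1 xs2 : R, is_optimal l1 l2 xs1 xs2 ->
  forall t1 t2 : R, in_T_infty l1 l2 t1 t2 ->
  forall x1 x2 : R, is_WE l1 l2 t1 t2 x1 x2 ->
    0 < x1 -> 0 < x2 ->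
    ((x1 > xs1 /\ x1 >= 1/2) \/ (x2 > xs2 /\ x2 >= 1/2)) ->
  forall mu : R, is_lub (mu2_class_values L) mu -> mu < 1 ->
    cost l1 l2 x1 x2 <= / (1 - mu) * cost l1 l2 xs1 xs2.
Proof.
  intros L HL l1 l2 HL1 HL2 xs1 xs2 [[Hxs1 [Hxs2 Hxs]] _] t1 t2 [Ht1 [Ht2 HT]]
    x1 x2 HWE Hx1 Hx2 Hcase mu Hlub Hmu.
  destruct (HT x1 x2 HWE) as [H1 H2].
  pose proof HWE as [[_ [_ Hx]] [E1 E2]].
  assert (Heq : l1 x1 + t1 = l2 x2 + t2) by (specialize (E1 Hx1); specialize (E2 Hx2); lra).
  destruct Hcase as [[Hg Hh]|[Hg Hh]].
  - apply (core L l1 l2 HL1 (HL _ HL1) (HL _ HL2) xs1 xs2 t1 t2 x1 x2 mu); auto; lra.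
  - replace (cost l1 l2 x1 x2) with (cost l2 l1 x2 x1) by (unfold cost; ring).
    replace (cost l1 l2 xs1 xs2) with (cost l2 l1 xs2 xs1) by (unfold cost; ring).
    apply (core L l2 l1 HL2 (HL _ HL2) (HL _ HL1) xs2 xs1 t2 t1 x2 x1 mu); try lra; auto.
    + intros t' y2 y1 Ht' W. apply (H2 t' y1 y2 Ht'). apply WE_swap. exact W.
    + intros t' y2 y1 Ht' W. apply (H1 t' y1 y2 Ht'). apply WE_swap. exact W.
Qed.
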